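(* Let $(F,v)$ be a Krasner valued hyperfield whose norm $\rho_v$ has trivial invariance group, i.e. $\mathrm{ig}(\rho_v)=\{0\}$. Then $\mathcal{O}_v=\{x\in F: x-x\subseteq 1-1\}$.
   Context: A hyperfield is $(F,+,\cdot,0,1)$ with $+$ a multivalued operation making $(F,+,0)$ a canonical hypergroup (associative, commutative, unique inverses $-x$ with $0\in x+(-x)$, and $z\in x+y\Rightarrow y\in z+(-x)$; write $x-y:=x+(-y)$, $A+B:=\bigcup_{a\in A,b\in B}a+b$), $(F,\cdot)$ commutative with $0$ absorbing, $x(y+z)=xy+xz$, and $F\setminus\{0\}$ an abelian group with neutral $1\neq0$. Valuation on $F$: for an ordered abelian group $\Gamma$ and $\infty>\Gamma$ with $\gamma+\infty=\infty+\gamma=\infty$, a surjective map $v:F\to\Gamma\cup\{\infty\}$ with $vx=\infty\iff x=0$, $v(xy)=vx+vy$, $z\in x+y\Rightarrow vz\ge\min\{vx,vy\}$; $vF:=v(F\setminus\{0\})$, $\mathcal{O}_v:=\{x:vx\ge0\}$. An initial segment of $\Gamma$ is $\rho\subseteq\Gamma$ with $\delta\in\rho,\gamma<\delta\Rightarrow\gamma\in\rho$; $\rho+\gamma:=\{\delta+\gamma:\delta\in\rho\}$; ''$\alpha>\rho+\gamma$'' means $\alpha\notin\rho+\gamma$; $\mathrm{ig}(\rho):=\{\gamma\in\Gamma:\rho+\gamma=\rho\}$. Krasner valued hyperfield: a valued hyperfield $(F,v)$ such that (KVH1) for all $x,y\in F$ with $0\notin x+y$, $v(x+y)$ is a singleton;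 (KVH2) there is an initial segment $\rho_v$ of $vF$ with $0\in\rho_v$ (the norm) such that for all $x,y,z,t\in F$ with $z\in x+y$: $t\in x+y$ iff $vs>\rho_v+\min\{vx,vy\}$ for all $s\in z-t$. *)

(* Defs.v *)
Set Implicit Arguments.

(* hadd x y z  means  z \in x + y  (x + y is a subset of the carrier). *)
Record Hyperfield := {
  hcar :> Type;
  hadd : hcar -> hcar -> hcar -> Prop;
  hmul : hcar -> hcar -> hcar;
  hzero : hcar;
  hone : hcar;
  hneg : hcar -> hcar;
  hadd_nonempty : forall x y, exists z, hadd x y z;
  hadd_comm : forall x y z, hadd x y z <-> hadd y x z;
  hadd_assoc : forall x y z w,
      (exists u, hadd x y u /\ hadd u z w) <-> (exists u, hadd y z u /\ hadd x u w);
  hadd_zero : forall x w, hadd x hzero w <-> w = x;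
  hneg_inv : forall x, hadd x (hneg x) hzero;
  hneg_uniq : forall x y, hadd x y hzero -> y = hneg x;
  hadd_rev : forall x y z, hadd x y z -> hadd z (hneg x) y;
  hmul_comm : forall x y, hmul x y = hmul y x;
  hmul_assoc : forall x y z, hmul x (hmul y z) = hmul (hmul x y) z;
  hmul_zero : forall x, hmul hzero x = hzero;
  hmul_one : forall x, hmul hone x = x;
  hone_neq0 : hone <> hzero;
  hmul_neq0 : forall x y, x <> hzero -> y <> hzero -> hmul x y <> hzero;
  hmul_inv : forall x, x <> hzero -> exists y, hmul x y = hone;
  (* distributivity as an equality of sets: x(y+z) = xy + xz *)
  hdistr : forall x y z w,
      (exists u, hadd y z u /\ w = hmul x u) <-> hadd (hmul x y) (hmul x z) w
}.

Arguments hadd {h}.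
Arguments hmul {h}.
Arguments hzero {h}.
Arguments hone {h}.
Arguments hneg {h}.

Definition hsub {F : Hyperfield} (x y : F) : F -> Prop := hadd x (hneg y).

Record OrdAbGroup := {
  gcar :> Type;
  gadd : gcar -> gcar -> gcar;
  gzero : gcar;
  gopp : gcar -> gcar;
  gle : gcar -> gcar -> Prop;
  gaddA : forall a b c, gadd a (gadd b c) = gadd (gadd a b) c;
  gaddC : forall a b, gadd a b = gadd b a;
  gadd0 : forall a, gadd a gzero = a;
  gaddN : forall a, gadd a (gopp a) = gzero;
  gle_refl : forall a, gle a a;
  gle_antisym : forall a b, gle a b -> gle b a -> a = b;
  gle_trans : forall a b c, gle a b -> gle b c -> gle a c;
  gle_total : forall a b, gle a b \/ gle b a;
  gle_add : forall a b c, gle a b -> gle (gadd a c) (gadd b c)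
}.

Arguments gadd {o}.
Arguments gzero {o}.
Arguments gopp {o}.
Arguments gle {o}.

(* Gamma \cup {infinity} is modelled as option Gamma, None = infinity. *)
Definition oadd {G : OrdAbGroup} (a b : option G) : option G :=
  match a, b with Some a, Some b => Some (gadd a b) | _, _ => None end.

Definition ole {G : OrdAbGroup} (a b : option G) : Prop :=
  match a, b with
  | _, None => True
  | None, Some _ => False
  | Some a, Some b => gle a b
  end.

Definition is_valuation (F : Hyperfield) (G : OrdAbGroup) (v : F -> option G) : Prop :=
  (forall o : option G, exists x, v x = o) /\
  (forall x, v x = None <-> x = hzero) /\
  (forall x y, v (hmul x y) = oadd (v x) (v y)) /\
  (forall x y z, hadd x y z -> ole (v x) (v z) \/ ole (v y) (v z)).

Definition valuation_ring {F : Hyperfield} {G : OrdAbGroup} (v : F -> option G)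
  : F -> Prop := fun x => ole (Some gzero) (v x).

Definition initial_segment {G : OrdAbGroup} (rho : G -> Prop) : Prop :=
  forall d g, rho d -> gle g d -> g <> d -> rho g.

Definition shift {G : OrdAbGroup} (rho : G -> Prop) (g : G) : G -> Prop :=
  fun a => exists d, rho d /\ a = gadd d g.

(* "alpha > rho + gamma" for alpha, gamma in Gamma \cup {infinity}:
   alpha does not lie in the cut rho + gamma.  For gamma = infinity the cut
   rho + infinity is taken to be all of Gamma. *)
Definition above_shift {G : OrdAbGroup} (rho : G -> Prop) (gamma alpha : option G) : Prop :=
  match alpha, gamma with
  | None, _ => True
  | Some a, None => False
  | Some a, Some g => ~ shift rho g a
  end.

Definition inv_group {G : OrdAbGroup} (rho : G -> Prop) : G -> Prop :=
  fun g => forall a, shift rho g a <-> rho a.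

Definition is_omin {G : OrdAbGroup} (a b m : option G) : Prop :=
  (m = a \/ m = b) /\ ole m a /\ ole m b.

Definition KVH1 (F : Hyperfield) (G : OrdAbGroup) (v : F -> option G) : Prop :=
  forall x y : F, ~ hadd x y hzero ->
    exists o, forall z, hadd x y z -> v z = o.

Definition KVH2_norm (F : Hyperfield) (G : OrdAbGroup) (v : F -> option G)
  (rho : G -> Prop) : Prop :=
  initial_segment rho /\ rho gzero /\
  forall x y z t : F, hadd x y z ->
    forall mn, is_omin (v x) (v y) mn ->
    (hadd x y t <-> forall s, hsub z t s -> above_shift rho mn (v s)).

(* Main.v *)
Require Import Defs.
From Stdlib Require Import Classical.

Lemma neg_neg (F : Hyperfield) (y : F) : hneg (hneg y) = y.
Proof.
  symmetry. apply hneg_uniq. apply hadd_comm. apply hneg_inv.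
Qed.

Lemma neg_mul (F : Hyperfield) (x : F) : hmul x (hneg hone) = hneg x.
Proof.
  apply hneg_uniq.
  assert (E: hmul x hone = x) by (rewrite hmul_comm; apply hmul_one).
  rewrite <- E at 1.
  apply (proj1 (hdistr F x hone (hneg hone) hzero)).
  exists hzero. split. apply hneg_inv. rewrite hmul_comm. symmetry. apply hmul_zero.
Qed.

Lemma g_two_zero (G : OrdAbGroup) (a : G) : gadd a a = gzero -> a = gzero.
Proof.
  intros H. destruct (gle_total _ a gzero) as [h|h].
  - apply gle_antisym; auto. pose proof (gle_add _ _ _ a h) as h2.
    rewrite H, gaddC, gadd0 in h2. exact h2.
  - apply gle_antisym; auto. pose proof (gle_add _ _ _ a h) as h2.
    rewrite H, gaddC, gadd0 in h2. exact h2.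
Qed.

Lemma v_neg (F : Hyperfield) (G : OrdAbGroup) (v : F -> option G)
  (Hv : is_valuation F G v) (x : F) : v (hneg x) = v x.
Proof.
  destruct Hv as [Hs [H0 [Hm _]]].
  assert (v1 : v (hone : F) = Some gzero).
  { destruct (v hone) as [g|] eqn:E.
    - pose proof (Hm hone hone) as K. rewrite hmul_one, E in K. simpl in K.
      injection K as K.
      f_equal.
      assert (X: gadd g (gopp g) = gadd (gadd g g) (gopp g)) by (rewrite <- K; reflexivity).
      rewrite <- gaddA, gaddN, gadd0 in X. symmetry; exact X.
    - apply H0 in E. exfalso; apply (hone_neq0 F E). }
  assert (vm : v (hneg (hone : F)) = Some gzero).
  { pose proof (Hm (hneg hone) (hneg hone)) as K.
    rewrite neg_mul, neg_neg, v1 in K.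
    destruct (v (hneg hone)) as [g|]; simpl in K; try discriminate.
    injection K as K. f_equal. apply g_two_zero; auto. }
  rewrite <- neg_mul, Hm, vm. destruct (v x); simpl; auto. rewrite gadd0; auto.
Qed.

Lemma key (F : Hyperfield) (G : OrdAbGroup) (v : F -> option G)
  (rho : G -> Prop) (Hv : is_valuation F G v) (H2 : KVH2_norm F G v rho)
  (x w : F) : hsub x x w <-> above_shift rho (v x) (v (hneg w)).
Proof.
  destruct H2 as [_ [_ K]].
  assert (Hz : hadd x (hneg x) hzero) by apply hneg_inv.
  assert (Hmin : is_omin (v x) (v (hneg x)) (v x)).
  { rewrite v_neg by auto. split; auto. destruct (v x); simpl; split; auto; apply gle_refl. }
  unfold hsub. rewrite (K _ _ _ w Hz _ Hmin). split.
  - intros H. apply H. unfold hsub. apply hadd_comm. apply hadd_zero. reflexivity.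
  - intros H s Hs. unfold hsub in Hs. apply hadd_comm in Hs. apply hadd_zero in Hs.
    subst; auto.
Qed.

Theorem corollary6p4 (F : Hyperfield) (G : OrdAbGroup) (v : F -> option G)
  (rho : G -> Prop)
  (Hv : is_valuation F G v)
  (H1 : KVH1 F G v)
  (H2 : KVH2_norm F G v rho)
  (Hig : forall g : G, inv_group rho g <-> g = gzero) :
  forall x : F,
    valuation_ring v x <-> (forall w, hsub x x w -> hsub (hone : F) (hone : F) w).
Proof.
  intros x.
  assert (v1 : v (hone : F) = Some gzero).
  { destruct Hv as [Hs [H0 [Hm _]]]. destruct (v hone) as [g|] eqn:E.
    - pose proof (Hm hone hone) as K. rewrite hmul_one, E in K. simpl in K.
      injection K as K.
      f_equal.
      assert (X: gadd g (gopp g) = gadd (gadd g g) (gopp g)) by (rewrite <- K; reflexivity).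
      rewrite <- gaddA, gaddN, gadd0 in X. symmetry; exact X.
    - apply H0 in E. exfalso; apply (hone_neq0 F E). }
  pose proof H2 as [Hini [Hr0 _]].
  unfold valuation_ring. split.
  - intros Hx w Hw. rewrite (key F G v rho Hv H2) in Hw. rewrite (key F G v rho Hv H2). rewrite v1.
    destruct (v x) as [g|] eqn:E; simpl in Hx.
    + destruct (v (hneg w)) as [a|]; simpl in *; auto.
      intros [d [Hd Ha]]. apply Hw. rewrite gadd0 in Ha. subst d.
      exists (gadd a (gopp g)). split.
      * destruct (classic (gadd a (gopp g) = a)) as [e|n]. rewrite e; auto.
        apply (Hini a); auto.
        pose proof (gle_add _ _ _ (gopp g) Hx) as h.
        rewrite gaddC, gadd0, gaddN in h.
        pose proof (gle_add _ _ _ a h) as h2.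
        rewrite (gaddC _ gzero), gadd0, (gaddC _ (gopp g)) in h2. exact h2.
      * rewrite <- gaddA. rewrite (gaddC _ (gopp g)), gaddN, gadd0. reflexivity.
    + destruct (v (hneg w)); simpl in *; auto.
  - intros Hx. destruct (v x) as [g|] eqn:E; simpl; auto.
    destruct (gle_total _ gzero g) as [h|h]; auto.
    assert (g = gzero) as ->. 2: apply gle_refl.
    apply Hig. intros a. split.
    + intros [d [Hd ->]].
      destruct (classic (gadd d g = d)) as [e|n]. rewrite e; auto.
      apply (Hini d); auto.
      pose proof (gle_add _ _ _ d h) as h2.
      rewrite (gaddC _ gzero), gadd0, (gaddC _ g) in h2. exact h2.
    + intros Ha. apply NNPP. intros Hn.
      destruct Hv as [Hs Hv2]. destruct (Hs (Some a)) as [y Hy].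
      specialize (Hx (hneg y)). rewrite !(key F G v rho (conj Hs Hv2) H2), neg_neg, Hy, E, v1 in Hx.
      simpl in Hx. apply (Hx Hn). exists a. split; auto. rewrite gadd0; auto.
Qed.
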